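(* Every proof in $\mathsf{PA}^\exists$ of a $\Sigma^0_1$ statement $\exists\alpha\mathsf{P}$ (with $\mathsf{P}$ atomic) can be transformed into a proof of $\exists\alpha\mathsf{P}$ in $\mathsf{HA}^\exists+\mathsf{EM}_1^-$.
   Context: The $\exists$-translation $F\mapsto F^\exists$ is: $F^\exists=F$ for atomic $F$; commuting with $\wedge,\vee,\to,\exists$; $(\forall xF)^\exists=\neg\exists x\neg F^\exists$. $\mathsf{PA}^\exists$ is the natural deduction system for arithmetic (over $0,\mathsf{S},+,\cdot,=$) with the intuitionistic rules for $\wedge,\vee,\to,\exists,\bot$, the $\exists$-translated arithmetical axioms, the translated induction rule (from $\Gamma\vdash A(0)$ and $\Gamma\vdash\neg\exists\alpha\neg(A(\alpha)\to A(\mathsf{S}\alpha))$ infer $\Gamma\vdash\neg\exists\alpha\neg A(\alpha)$), and the full excluded middle rule $\mathsf{EM}$ (from $\Gamma,A\vdash C$ and $\Gamma,\neg A\vdash C$ infer $\Gamma\vdash C$, $A,C$ arbitrary). $\mathsf{HA}^\exists$ is intuitionistic arithmetic with the $\exists$-translations of the Heyting arithmetic axioms. $\mathsf{EM}_1^-$ is the rule: for atomic $\mathsf{P}$ and $C$ (with $\mathsf{P}^\bot$ the complementary atomic predicate of $\mathsf{P}$), from $\Gamma,\forall\alpha\mathsf{P}\vdash\exists\beta C$ and $\Gamma,\exists\alpha\mathsf{P}^\bot\vdash\exists\beta C$ infer $\Gamma\vdash\exists\beta C$. *)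

(* Defs.v *)
From Stdlib Require Import List.
Import ListNotations.

Inductive term : Type :=
  | Var  : nat -> term
  | Zero : term
  | Succ : term -> term
  | Plus : term -> term -> term
  | Mult : term -> term -> term.

(* Formulas of the exists-language: no universal quantifier.
   Atomic predicates: equality and its complementary predicate (disequality). *)
Inductive form : Type :=
  | Bot : form
  | Eq  : term -> term -> form
  | Neq : term -> term -> form
  | And : form -> form -> form
  | Or  : form -> form -> form
  | Imp : form -> form -> form
  | Ex  : form -> form.  (* binds de Bruijn variable 0 *)

Definition Neg (A : form) : form := Imp A Bot.

Definition atomic (A : form) : Prop :=
  match A with Eq _ _ | Neq _ _ => True | _ => False end.

Definition compl (A : form) : form :=
  match A with
  | Eq t u => Neq t u
  | Neq t u => Eq t u
  | B => B
  end.

Fixpoint rename_term (r : nat -> nat) (t : term) : term :=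
  match t with
  | Var n => Var (r n)
  | Zero => Zero
  | Succ t => Succ (rename_term r t)
  | Plus t u => Plus (rename_term r t) (rename_term r u)
  | Mult t u => Mult (rename_term r t) (rename_term r u)
  end.

Fixpoint subst_term (s : nat -> term) (t : term) : term :=
  match t with
  | Var n => s n
  | Zero => Zero
  | Succ t => Succ (subst_term s t)
  | Plus t u => Plus (subst_term s t) (subst_term s u)
  | Mult t u => Mult (subst_term s t) (subst_term s u)
  end.

Definition up (s : nat -> term) : nat -> term :=
  fun n => match n with
           | O => Var O
           | S m => rename_term S (s m)
           end.

Fixpoint subst (s : nat -> term) (A : form) : form :=
  match A with
  | Bot => Bot
  | Eq t u => Eq (subst_term s t) (subst_term s u)
  | Neq t u => Neq (subst_term s t) (subst_term s u)
  | And A B => And (subst s A) (subst s B)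
  | Or A B => Or (subst s A) (subst s B)
  | Imp A B => Imp (subst s A) (subst s B)
  | Ex A => Ex (subst (up s) A)
  end.

Definition lift (A : form) : form := subst (fun n => Var (S n)) A.

Definition inst (t : term) (A : form) : form :=
  subst (fun n => match n with O => t | S m => Var m end) A.

Definition succ_inst (A : form) : form :=
  subst (fun n => match n with O => Succ (Var O) | S m => Var (S m) end) A.

Fixpoint term_bound (k : nat) (t : term) : Prop :=
  match t with
  | Var n => n < k
  | Zero => True
  | Succ t => term_bound k t
  | Plus t u | Mult t u => term_bound k t /\ term_bound k u
  end.

Fixpoint form_bound (k : nat) (A : form) : Prop :=
  match A with
  | Bot => True
  | Eq t u | Neq t u => term_bound k t /\ term_bound k u
  | And A B | Or A B | Imp A B => form_bound k A /\ form_bound k B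
  | Ex A => form_bound (S k) A
  end.

Definition closed (A : form) : Prop := form_bound 0 A.

(* Arithmetical axioms (all quantifier-free, so their exists-translation is
   themselves; open schemata over arbitrary terms stand for universal closures). *)
Inductive ArithAx : form -> Prop :=
  | ax_refl t : ArithAx (Eq t t)
  | ax_leib t u A : atomic A -> ArithAx (Imp (Eq t u) (Imp (inst t A) (inst u A)))
  | ax_succ0 t : ArithAx (Neg (Eq (Succ t) Zero))
  | ax_succinj t u : ArithAx (Imp (Eq (Succ t) (Succ u)) (Eq t u))
  | ax_plus0 t : ArithAx (Eq (Plus t Zero) t)
  | ax_plusS t u : ArithAx (Eq (Plus t (Succ u)) (Succ (Plus t u)))
  | ax_mult0 t : ArithAx (Eq (Mult t Zero) Zero)
  | ax_multS t u : ArithAx (Eq (Mult t (Succ u)) (Plus (Mult t u) t))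
  | ax_neq1 t u : ArithAx (Imp (Neq t u) (Neg (Eq t u)))
  | ax_neq2 t u : ArithAx (Imp (Neg (Eq t u)) (Neq t u)).

Inductive system : Type := PAex | HAex_EM1.

Inductive deriv (sys : system) : list form -> form -> Prop :=
  | d_hyp G A : In A G -> deriv sys G A
  | d_ax G A : ArithAx A -> deriv sys G A
  | d_andI G A B : deriv sys G A -> deriv sys G B -> deriv sys G (And A B)
  | d_andE1 G A B : deriv sys G (And A B) -> deriv sys G A
  | d_andE2 G A B : deriv sys G (And A B) -> deriv sys G B
  | d_orI1 G A B : deriv sys G A -> deriv sys G (Or A B)
  | d_orI2 G A B : deriv sys G B -> deriv sys G (Or A B)
  | d_orE G A B C : deriv sys G (Or A B) -> deriv sys (A :: G) C ->
      deriv sys (B :: G) C -> deriv sys G C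
  | d_impI G A B : deriv sys (A :: G) B -> deriv sys G (Imp A B)
  | d_impE G A B : deriv sys G (Imp A B) -> deriv sys G A -> deriv sys G B
  | d_exI G A t : deriv sys G (inst t A) -> deriv sys G (Ex A)
  | d_exE G A C : deriv sys G (Ex A) -> deriv sys (A :: map lift G) (lift C) ->
      deriv sys G C
  | d_botE G A : deriv sys G Bot -> deriv sys G A
  (* exists-translated induction rule *)
  | d_ind G A : deriv sys G (inst Zero A) ->
      deriv sys G (Neg (Ex (Neg (Imp A (succ_inst A))))) ->
      deriv sys G (Neg (Ex (Neg A)))
  | d_EM G A C : sys = PAex -> deriv sys (A :: G) C -> deriv sys (Neg A :: G) C ->
      deriv sys G C
  (* EM1^-: only in HA^exists + EM1^-; forall alpha P read as its
     exists-translation ~ exists alpha ~ P *)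
  | d_EM1 G P C : sys = HAex_EM1 -> atomic P -> atomic C ->
      deriv sys (Neg (Ex (Neg P)) :: G) (Ex C) ->
      deriv sys (Ex (compl P) :: G) (Ex C) ->
      deriv sys G (Ex C).

(* Main.v *)
Require Import Defs.
From Stdlib Require Import List.
From Stdlib Require Import Arith Lia Classical FunctionalExtensionality.
Import ListNotations.

(* Proof strategy: soundness of PA^exists in the standard model, then
   Sigma_1-completeness of HA^exists for closed atomic formulas. *)

Definition scons (x : nat) (r : nat -> nat) : nat -> nat :=
  fun n => match n with O => x | S m => r m end.

Fixpoint ev (r : nat -> nat) (t : term) : nat :=
  match t with
  | Var n => r n
  | Zero => 0
  | Succ t => S (ev r t)
  | Plus t u => ev r t + ev r u
  | Mult t u => ev r t * ev r u
  end.

Fixpoint sat (r : nat -> nat) (A : form) : Prop :=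
  match A with
  | Bot => False
  | Eq t u => ev r t = ev r u
  | Neq t u => ev r t <> ev r u
  | And A B => sat r A /\ sat r B
  | Or A B => sat r A \/ sat r B
  | Imp A B => sat r A -> sat r B
  | Ex A => exists x, sat (scons x r) A
  end.

Lemma ev_rename r f t : ev r (rename_term f t) = ev (fun n => r (f n)) t.
Proof. induction t; simpl; congruence. Qed.

Lemma ev_subst r s t : ev r (subst_term s t) = ev (fun n => ev r (s n)) t.
Proof. induction t; simpl; congruence. Qed.

Lemma sat_subst A : forall s r, sat r (subst s A) <-> sat (fun n => ev r (s n)) A.
Proof.
  induction A; intros s r; simpl; rewrite ?ev_subst; try tauto.
  - rewrite IHA1, IHA2; tauto.
  - rewrite IHA1, IHA2; tauto.
  - rewrite IHA1, IHA2; tauto.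
  - split; intros [x Hx]; exists x; rewrite IHA in *;
    [ replace (scons x (fun n => ev r (s n))) with (fun n => ev (scons x r) (up s n)); auto
    | replace (fun n => ev (scons x r) (up s n)) with (scons x (fun n => ev r (s n))); auto ];
    apply functional_extensionality; intros [|m]; simpl; auto;
    rewrite ev_rename; reflexivity.
Qed.

Lemma sat_lift x r A : sat (scons x r) (lift A) <-> sat r A.
Proof. unfold lift; rewrite sat_subst; simpl. reflexivity. Qed.

Lemma sat_inst r t A : sat r (inst t A) <-> sat (scons (ev r t) r) A.
Proof.
  unfold inst; rewrite sat_subst.
  replace (fun n => ev r (match n with 0 => t | S m => Var m end)) with (scons (ev r t) r);
  [reflexivity|].
  apply functional_extensionality; intros [|m]; reflexivity.
Qed.

Lemma sat_succ_inst x r A : sat (scons x r) (succ_inst A) <-> sat (scons (S x) r) A.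
Proof.
  unfold succ_inst; rewrite sat_subst.
  replace (fun n => ev (scons x r) (match n with 0 => Succ (Var 0) | S m => Var (S m) end))
    with (scons (S x) r); [reflexivity|].
  apply functional_extensionality; intros [|m]; reflexivity.
Qed.

Lemma soundness G A : deriv PAex G A ->
  forall r, (forall B, In B G -> sat r B) -> sat r A.
Proof.
  induction 1; intros r HG; simpl in *.
  - auto.
  - destruct H; simpl; try lia.
    intros Heq. rewrite !sat_inst, Heq. auto.
  - auto.
  - apply (IHderiv r HG).
  - apply (IHderiv r HG).
  - auto.
  - auto.
  - destruct (IHderiv1 r HG).
    + apply IHderiv2; intros Z [<-|HB]; auto.
    + apply IHderiv3; intros Z [<-|HB]; auto.
  - intros HA; apply IHderiv; intros Z [<-|HB]; auto.
  - apply (IHderiv1 r HG); auto.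
  - specialize (IHderiv r HG). rewrite sat_inst in IHderiv. eauto.
  - destruct (IHderiv1 r HG) as [x Hx].
    apply (sat_lift x r). apply IHderiv2.
    intros Z [<-|HB]; auto.
    apply in_map_iff in HB as [Z' [<- HB']]. apply sat_lift; auto.
  - destruct (IHderiv r HG).
  - specialize (IHderiv1 r HG). specialize (IHderiv2 r HG).
    rewrite sat_inst in IHderiv1. simpl in IHderiv1.
    intros [x Hx]. apply Hx. clear Hx.
    assert (step : forall y, sat (scons y r) A -> sat (scons (S y) r) A).
    { intros y Hy. apply sat_succ_inst.
      apply NNPP. intros Hn. apply IHderiv2. exists y. auto. }
    induction x; auto.
  - destruct (classic (sat r A)).
    + apply IHderiv1; intros Z [<-|HB]; auto.
    + apply IHderiv2; intros Z [<-|HB]; auto.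
  - discriminate.
Qed.

Notation D := (deriv HAex_EM1).

Fixpoint num (n : nat) : term := match n with O => Zero | S k => Succ (num k) end.

Definition sg (t : term) : nat -> term := fun n => match n with O => t | S m => Var m end.

Lemma sub_sh t v : subst_term (fun n => match n with O => t | S m => Var m end)
  (rename_term S v) = v.
Proof. induction v; simpl; congruence. Qed.

Lemma leib G t u A X Y : D G (Eq t u) -> D G X -> atomic A ->
  X = inst t A -> Y = inst u A -> D G Y.
Proof.
  intros H1 H2 HA -> ->.
  eapply d_impE; [eapply d_impE; [apply d_ax, ax_leib; exact HA| exact H1]| exact H2].
Qed.

Ltac ieq := unfold inst; simpl; rewrite ?sub_sh; reflexivity.

Lemma refl G t : D G (Eq t t).
Proof. apply d_ax, ax_refl. Qed.

Lemma sym G t u : D G (Eq t u) -> D G (Eq u t).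
Proof.
  intros H. apply (leib G t u (Eq (Var 0) (rename_term S t)) (Eq t t)); auto.
  apply refl. exact I. ieq. ieq.
Qed.

Lemma trans G t u v : D G (Eq t u) -> D G (Eq u v) -> D G (Eq t v).
Proof.
  intros H1 H2. apply sym in H1.
  apply (leib G u t (Eq (Var 0) (rename_term S v)) (Eq u v)); auto.
  exact I. ieq. ieq.
Qed.

Lemma congS G t u : D G (Eq t u) -> D G (Eq (Succ t) (Succ u)).
Proof.
  intros H. apply (leib G t u (Eq (Succ (rename_term S t)) (Succ (Var 0))) (Eq (Succ t) (Succ t))); auto.
  apply refl. exact I. ieq. ieq.
Qed.

Lemma congP G t u t' u' : D G (Eq t t') -> D G (Eq u u') ->
  D G (Eq (Plus t u) (Plus t' u')).
Proof.
  intros H1 H2.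
  assert (D G (Eq (Plus t u) (Plus t' u))).
  { apply (leib G t t' (Eq (Plus (rename_term S t) (rename_term S u)) (Plus (Var 0) (rename_term S u))) (Eq (Plus t u) (Plus t u))); auto.
    apply refl. exact I. ieq. ieq. }
  apply (leib G u u' (Eq (Plus (rename_term S t) (rename_term S u)) (Plus (rename_term S t') (Var 0))) (Eq (Plus t u) (Plus t' u))); auto.
  exact I. ieq. ieq.
Qed.

Lemma congM G t u t' u' : D G (Eq t t') -> D G (Eq u u') ->
  D G (Eq (Mult t u) (Mult t' u')).
Proof.
  intros H1 H2.
  assert (D G (Eq (Mult t u) (Mult t' u))).
  { apply (leib G t t' (Eq (Mult (rename_term S t) (rename_term S u)) (Mult (Var 0) (rename_term S u))) (Eq (Mult t u) (Mult t u))); auto.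
    apply refl. exact I. ieq. ieq. }
  apply (leib G u u' (Eq (Mult (rename_term S t) (rename_term S u)) (Mult (rename_term S t') (Var 0))) (Eq (Mult t u) (Mult t' u))); auto.
  exact I. ieq. ieq.
Qed.

Lemma plus_num G a b : D G (Eq (Plus (num a) (num b)) (num (a + b))).
Proof.
  induction b.
  - rewrite Nat.add_0_r. apply d_ax, ax_plus0.
  - rewrite Nat.add_succ_r. simpl.
    eapply trans; [apply d_ax, ax_plusS|]. apply congS, IHb.
Qed.

Lemma mult_num G a b : D G (Eq (Mult (num a) (num b)) (num (a * b))).
Proof.
  induction b.
  - rewrite Nat.mul_0_r. apply d_ax, ax_mult0.
  - rewrite Nat.mul_succ_r. simpl.
    eapply trans; [apply d_ax, ax_multS|].
    eapply trans; [apply congP; [exact IHb| apply refl]|]. apply plus_num.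
Qed.

Definition r0 : nat -> nat := fun _ => 0.

Lemma complete_term t : term_bound 0 t -> forall G, D G (Eq t (num (ev r0 t))).
Proof.
  induction t; simpl; intros Hb G.
  - lia.
  - apply refl.
  - apply congS; auto.
  - destruct Hb. eapply trans; [apply congP; [apply IHt1|apply IHt2]; auto|]. apply plus_num.
  - destruct Hb. eapply trans; [apply congM; [apply IHt1|apply IHt2]; auto|]. apply mult_num.
Qed.

Lemma neq_num a : forall b G, a <> b -> D G (Neg (Eq (num a) (num b))).
Proof.
  induction a; intros [|b] G Hab; simpl.
  - congruence.
  - apply d_impI. eapply d_impE; [apply d_ax, ax_succ0|]. apply sym, d_hyp; left; reflexivity.
  - apply d_ax, ax_succ0.
  - apply d_impI. eapply d_impE; [apply (IHa b); lia|].
    eapply d_impE; [apply d_ax, ax_succinj|]. apply d_hyp; left; reflexivity.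
Qed.

Lemma num_bound n : term_bound 0 (num n).
Proof. induction n; simpl; auto. Qed.

Lemma bound_inst n t : term_bound 1 t -> term_bound 0 (subst_term (sg (num n)) t).
Proof.
  induction t; simpl; intros Hb; try tauto.
  - destruct n0; [apply num_bound| lia].
Qed.

Lemma ev_num r n : ev r (num n) = n.
Proof. induction n; simpl; auto. Qed.

Lemma ev_inst n t : ev r0 (subst_term (sg (num n)) t) = ev (scons n r0) t.
Proof.
  rewrite ev_subst. f_equal. apply functional_extensionality; intros [|m]; simpl.
  - apply ev_num.
  - reflexivity.
Qed.

Theorem mainTheorem11 (P : form) :
  atomic P -> closed (Ex P) ->
  deriv PAex nil (Ex P) -> deriv HAex_EM1 nil (Ex P).
Proof.
  intros HP Hc Hd.
  pose proof (soundness _ _ Hd r0 ltac:(intros B [])) as [n Hn].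
  apply d_exI with (t := num n).
  unfold closed in Hc; simpl in Hc.
  destruct P as [| t u | t u | | | |]; simpl in HP; try contradiction; simpl in Hc;
    destruct Hc as [Ht Hu]; unfold inst; simpl; fold (sg (num n));
    pose proof (ev_inst n t) as Et; pose proof (ev_inst n u) as Eu; simpl in Hn.
  - pose proof (complete_term _ (bound_inst n _ Ht) []) as Ct.
    pose proof (complete_term _ (bound_inst n _ Hu) []) as Cu.
    rewrite Et, Hn, <- Eu in Ct. eapply trans; [exact Ct| apply sym, Cu].
  - eapply d_impE; [apply d_ax, ax_neq2|].
    apply d_impI. eapply d_impE; [apply (neq_num (ev r0 (subst_term (sg (num n)) t))
                                       (ev r0 (subst_term (sg (num n)) u)))|].
    + rewrite Et, Eu. exact Hn.
    + eapply trans; [apply sym|].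
      * apply complete_term, bound_inst, Ht.
      * eapply trans; [apply d_hyp; left; reflexivity| apply complete_term, bound_inst, Hu].
Qed.
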